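(* Let $\sim$ be an analytic equivalence relation on the Cantor set $\{0,1\}^{\mathbb{N}}$ (i.e. $\sim$ is an analytic subset of $\{0,1\}^{\mathbb{N}}\times\{0,1\}^{\mathbb{N}}$) with the property that whenever $\alpha,\beta\in\{0,1\}^{\mathbb{N}}$ differ at exactly one coordinate, $\alpha\not\sim\beta$. Then $\sim$ is a meager subset of $\{0,1\}^{\mathbb{N}}\times\{0,1\}^{\mathbb{N}}$, and $\sim$ has uncountably many equivalence classes.
   Context: The Cantor set $\{0,1\}^{\mathbb{N}}$ carries the product topology with $\{0,1\}$ discrete. A space is Polish if it is separable and completely metrizable. If $Y$ is Polish, a set $A\subseteq Y$ is analytic if there is a Polish space $Z$ and a closed set $D\subseteq Y\times Z$ such that $A$ is the projection of $D$ to $Y$. A set is meager if it is a countable union of nowhere dense sets. *)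

(* Defs.v *)
From Stdlib Require Import Reals.
Open Scope R_scope.

Definition Cantor : Type := nat -> bool.

Definition Cantor2 : Type := (Cantor * Cantor)%type.

(** Basic open neighbourhoods in the product topology: agree on the first n coordinates. *)
Definition agree (n : nat) (a b : Cantor) : Prop :=
  forall i, (i < n)%nat -> a i = b i.

Definition cyl2 (p : Cantor2) (n : nat) (q : Cantor2) : Prop :=
  agree n (fst p) (fst q) /\ agree n (snd p) (snd q).

Definition closure2 (A : Cantor2 -> Prop) (p : Cantor2) : Prop :=
  forall n, exists q, cyl2 p n q /\ A q.

Definition interior2 (A : Cantor2 -> Prop) (p : Cantor2) : Prop :=
  exists n, forall q, cyl2 p n q -> A q.

Definition nowhere_dense2 (A : Cantor2 -> Prop) : Prop :=
  forall p, ~ interior2 (closure2 A) p.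

Definition meager2 (A : Cantor2 -> Prop) : Prop :=
  exists N : nat -> Cantor2 -> Prop,
    (forall k, nowhere_dense2 (N k)) /\
    (forall p, A p <-> exists k, N k p).

(** Complete separable metric spaces (every Polish space is homeomorphic to one). *)
Definition is_metric {Z : Type} (d : Z -> Z -> R) : Prop :=
  (forall x y, 0 <= d x y) /\
  (forall x y, d x y = 0 <-> x = y) /\
  (forall x y, d x y = d y x) /\
  (forall x y z, d x z <= d x y + d y z).

Definition complete_metric {Z : Type} (d : Z -> Z -> R) : Prop :=
  forall u : nat -> Z,
    (forall eps, eps > 0 -> exists N, forall m n, (m >= N)%nat -> (n >= N)%nat ->
        d (u m) (u n) < eps) ->
    exists l, forall eps, eps > 0 -> exists N, forall n, (n >= N)%nat -> d (u n) l < eps.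

Definition separable_metric {Z : Type} (d : Z -> Z -> R) : Prop :=
  exists s : nat -> Z, forall z eps, eps > 0 -> exists n, d z (s n) < eps.

Definition polish_metric {Z : Type} (d : Z -> Z -> R) : Prop :=
  is_metric d /\ complete_metric d /\ separable_metric d.

Definition closed_in_prod {Z : Type} (d : Z -> Z -> R) (D : Cantor2 -> Z -> Prop) : Prop :=
  forall p z, ~ D p z ->
    exists n eps, eps > 0 /\
      forall q w, cyl2 p n q -> d z w < eps -> ~ D q w.

Definition analytic2 (A : Cantor2 -> Prop) : Prop :=
  exists (Z : Type) (d : Z -> Z -> R),
    polish_metric d /\
    exists D : Cantor2 -> Z -> Prop,
      closed_in_prod d D /\ (forall p, A p <-> exists z, D p z).

Definition equivalence_rel (E : Cantor -> Cantor -> Prop) : Prop :=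
  (forall a, E a a) /\ (forall a b, E a b -> E b a) /\
  (forall a b c, E a b -> E b c -> E a c).

Definition differ_at_one (a b : Cantor) : Prop :=
  exists i, a i <> b i /\ forall j, j <> i -> a j = b j.

Definition graph2 (E : Cantor -> Cantor -> Prop) (p : Cantor2) : Prop :=
  E (fst p) (snd p).

Definition countably_many_classes (E : Cantor -> Cantor -> Prop) : Prop :=
  exists f : nat -> Cantor, forall a, exists n, E a (f n).

(* Main.v *)
Require Import Defs.
From Stdlib Require Import Reals Lra Lia Arith List Classical ClassicalEpsilon Cantor FunctionalExtensionality.
Import ListNotations.

Lemma agree_refl n a : agree n a a.
Proof. intros i _; reflexivity. Qed.
Lemma agree_sym n a b : agree n a b -> agree n b a.
Proof. intros H i Hi; symmetry; auto. Qed.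
Lemma agree_trans n a b c : agree n a b -> agree n b c -> agree n a c.
Proof. intros H1 H2 i Hi; rewrite H1; auto. Qed.
Lemma agree_mono m n a b : (m <= n)%nat -> agree n a b -> agree m a b.
Proof. intros Hmn H i Hi; apply H; lia. Qed.

Lemma cyl_refl p n : cyl2 p n p.
Proof. split; apply agree_refl. Qed.
Lemma cyl_sym p n q : cyl2 p n q -> cyl2 q n p.
Proof. intros [H1 H2]; split; apply agree_sym; auto. Qed.
Lemma cyl_trans p n q r : cyl2 p n q -> cyl2 q n r -> cyl2 p n r.
Proof. intros [H1 H2] [H3 H4]; split; eapply agree_trans; eauto. Qed.
Lemma cyl_mono m n p q : (m <= n)%nat -> cyl2 p n q -> cyl2 p m q.
Proof. intros Hmn [H1 H2]; split; eapply agree_mono; eauto. Qed.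
Lemma cyl_sub p n q m : cyl2 p n q -> (n <= m)%nat -> forall r, cyl2 q m r -> cyl2 p n r.
Proof. intros H Hm r Hr. eapply cyl_trans; eauto. eapply cyl_mono; eauto. Qed.

Definition ND (A : Cantor2 -> Prop) := forall p n, exists q m,
  (forall r, cyl2 q m r -> cyl2 p n r) /\ (forall r, cyl2 q m r -> ~ A r).
Definition Mg (A : Cantor2 -> Prop) := exists N : nat -> Cantor2 -> Prop,
  (forall k, ND (N k)) /\ (forall p, A p -> exists k, N k p).

Lemma ND_sub A B : ND B -> (forall p, A p -> B p) -> ND A.
Proof. intros H S p n; destruct (H p n) as (q&m&H1&H2); exists q, m; split; auto.
  intros r Hr HA; apply (H2 r Hr); auto. Qed.

Lemma Mg_sub A B : Mg B -> (forall p, A p -> B p) -> Mg A.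
Proof. intros (N&H1&H2) S; exists N; split; auto. Qed.

Lemma ND_Mg A : ND A -> Mg A.
Proof. intros H; exists (fun _ => A); split; auto. intros p Hp; exists 0%nat; auto. Qed.

Lemma Mg_empty : Mg (fun _ => False).
Proof. apply ND_Mg. intros p n; exists p, n; split; auto. Qed.

Lemma Mg_union (M : nat -> Cantor2 -> Prop) : (forall k, Mg (M k)) -> Mg (fun p => exists k, M k p).
Proof.
  intros H. destruct (choice (fun k N => (forall j, ND (N j)) /\ (forall p, M k p -> exists j, N j p)) H) as [f Hf].
  exists (fun n => f (fst (Cantor.of_nat n)) (snd (Cantor.of_nat n))). split.
  - intros n; apply Hf.
  - intros p [k Hk]. destruct (proj2 (Hf k) p Hk) as [j Hj].
    exists (Cantor.to_nat (k, j)). rewrite Cantor.cancel_of_to; simpl; auto.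
Qed.

Lemma Mg_union2 A B : Mg A -> Mg B -> Mg (fun p => A p \/ B p).
Proof.
  intros HA HB. apply Mg_sub with (fun p => exists k, (fun k => match k with 0 => A | _ => B end) k p).
  - apply Mg_union; intros [|k]; auto.
  - intros p [H|H]; [exists 0%nat | exists 1%nat]; auto.
Qed.

Lemma baire (N : nat -> Cantor2 -> Prop) p n : (forall k, ND (N k)) ->
  exists r, cyl2 p n r /\ forall k, ~ N k r.
Proof.
  intros HN.
  assert (Hstep : forall (k : nat) (qm : Cantor2 * nat), exists qm' : Cantor2 * nat,
     (S (snd qm) <= snd qm')%nat /\ (forall r, cyl2 (fst qm') (snd qm') r -> cyl2 (fst qm) (snd qm) r)
     /\ (forall r, cyl2 (fst qm') (snd qm') r -> ~ N k r)).
  { intros k [q m]. destruct (HN k q m) as (q'&m'&H1&H2).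
    exists (q', Nat.max m' (S m)); simpl; split; [lia|split].
    - intros r Hr; apply H1; eapply cyl_mono; [|eauto]; lia.
    - intros r Hr; apply H2; eapply cyl_mono; [|eauto]; lia. }
  destruct (choice (fun (kq : nat * (Cantor2*nat)) qm' => (S (snd (snd kq)) <= snd qm')%nat /\ (forall r, cyl2 (fst qm') (snd qm') r -> cyl2 (fst (snd kq)) (snd (snd kq)) r)
     /\ (forall r, cyl2 (fst qm') (snd qm') r -> ~ N (fst kq) r))) as [st Hst].
  { intros [k qm]; apply Hstep. }
  set (sq := fix sq k := match k with 0 => (p, n) | S k => st (k, sq k) end).
  assert (Hs : forall k, (S (snd (sq k)) <= snd (sq (S k)))%nat /\
     (forall r, cyl2 (fst (sq (S k))) (snd (sq (S k))) r -> cyl2 (fst (sq k)) (snd (sq k)) r)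
     /\ (forall r, cyl2 (fst (sq (S k))) (snd (sq (S k))) r -> ~ N k r)).
  { intros k; apply (Hst (k, sq k)). }
  assert (Hm : forall k, (k <= snd (sq k))%nat).
  { induction k; [lia|]. pose proof (proj1 (Hs k)); lia. }
  assert (Hnest : forall k K, (k <= K)%nat -> forall r, cyl2 (fst (sq K)) (snd (sq K)) r -> cyl2 (fst (sq k)) (snd (sq k)) r).
  { intros k K HK; induction HK; auto. intros r Hr; apply IHHK, (proj1 (proj2 (Hs m))); auto. }
  set (r := (fun i => fst (fst (sq (S i))) i, fun i => snd (fst (sq (S i))) i)).
  assert (Hr : forall k, cyl2 (fst (sq k)) (snd (sq k)) r).
  { intros k. split; intros i Hi; simpl;
    (assert (H1 := Hnest k (Nat.max k (S i)) ltac:(lia) _ (cyl_refl _ _));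
     assert (H2 := Hnest (S i) (Nat.max k (S i)) ltac:(lia) _ (cyl_refl _ _));
     destruct H1 as [H1a H1b]; destruct H2 as [H2a H2b]; specialize (Hm (S i))).
    - change (fst (fst (sq k)) i = fst (fst (sq (S i))) i). rewrite (H1a i Hi), (H2a i); auto; lia.
    - change (snd (fst (sq k)) i = snd (fst (sq (S i))) i). rewrite (H1b i Hi), (H2b i); auto; lia. }
  exists r; split; [apply (Hr 0%nat)|]. intros k; apply (proj2 (proj2 (Hs k))), Hr.
Qed.

Lemma cyl_not_Mg p n : ~ Mg (cyl2 p n).
Proof.
  intros (N&H1&H2). destruct (baire N p n H1) as (r&Hr&Hk).
  destruct (H2 r Hr) as [k Hk']; eapply Hk; eauto.
Qed.

Definition closed (S : Cantor2 -> Prop) := forall p, ~ S p -> exists n, forall q, cyl2 p n q -> ~ S q.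
Definition intr (S : Cantor2 -> Prop) p := exists n, forall q, cyl2 p n q -> S q.
Definition Dn (A : Cantor2 -> Prop) p := forall n, ~ Mg (fun q => cyl2 p n q /\ A q).

Lemma cyl_same p n q : cyl2 p n q -> forall r, cyl2 q n r -> cyl2 p n r.
Proof. intros; eapply cyl_trans; eauto. Qed.
Lemma cyl_same' p n q : cyl2 p n q -> forall r, cyl2 p n r -> cyl2 q n r.
Proof. intros; eapply cyl_trans; eauto using cyl_sym. Qed.

Lemma bits_exist n : forall (a : Cantor), exists m, forall i, (i < n)%nat -> Nat.testbit m i = a i.
Proof.
  induction n; intros a. { exists 0%nat; intros; lia. }
  destruct (IHn (fun i => a (S i))) as [m Hm].
  exists (2 * m + Nat.b2n (a 0%nat))%nat. intros [|i] Hi.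
  - apply Nat.testbit_0_r.
  - rewrite Nat.testbit_succ_r. apply Hm; lia.
Qed.

Definition pt (m : nat) : Cantor2 :=
  (fun i => Nat.testbit (fst (Cantor.of_nat m)) i, fun i => Nat.testbit (snd (Cantor.of_nat m)) i).

Lemma pt_dense p n : exists m, cyl2 p n (pt m).
Proof.
  destruct (bits_exist n (fst p)) as [m1 H1]. destruct (bits_exist n (snd p)) as [m2 H2].
  exists (Cantor.to_nat (m1, m2)). unfold pt; rewrite Cantor.cancel_of_to; simpl.
  split; intros i Hi; simpl; symmetry; auto.
Qed.

Lemma not_D_Mg A : Mg (fun p => A p /\ ~ Dn A p).
Proof.
  apply Mg_sub with (fun p => exists k, (fun k q => Mg (fun q => cyl2 (pt (fst (Cantor.of_nat k))) (snd (Cantor.of_nat k)) q /\ A q) /\ cyl2 (pt (fst (Cantor.of_nat k))) (snd (Cantor.of_nat k)) q /\ A q) k p).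
  - apply Mg_union. intros k. destruct (classic (Mg (fun q => cyl2 (pt (fst (Cantor.of_nat k))) (snd (Cantor.of_nat k)) q /\ A q))) as [H|H].
    + eapply Mg_sub; [apply H|]. intros q [_ Hq]; auto.
    + eapply Mg_sub; [apply Mg_empty|]. intros q [Hq _]; auto.
  - intros p [Hp HD]. unfold Dn in HD. apply not_all_ex_not in HD as [n Hn]. apply NNPP in Hn.
    destruct (pt_dense p n) as [m Hm]. exists (Cantor.to_nat (m, n)). rewrite Cantor.cancel_of_to; simpl.
    split; [|split; auto; apply cyl_sym; auto].
    eapply Mg_sub; [apply Hn|]. intros q [Hq Aq]; split; auto. eapply cyl_same; eauto.
Qed.

Lemma D_closed A : closed (Dn A).
Proof.
  intros p Hp. unfold Dn in Hp. apply not_all_ex_not in Hp as [n Hn]. apply NNPP in Hn.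
  exists n. intros q Hq HD. apply (HD n). eapply Mg_sub; [apply Hn|].
  intros r [Hr Ar]; split; auto. eapply cyl_same; eauto.
Qed.

Lemma closed_bd_ND G : closed G -> ND (fun p => G p /\ ~ intr G p).
Proof.
  intros HG p n. destruct (classic (forall q, cyl2 p n q -> G q)) as [H|H].
  - exists p, n; split; auto. intros r Hr [_ Hi]; apply Hi. exists n. intros q Hq; apply H.
    eapply cyl_same; eauto.
  - apply not_all_ex_not in H as [q Hq]. apply imply_to_and in Hq as [Hq1 Hq2].
    destruct (HG q Hq2) as [m Hm]. exists q, (Nat.max n m); split.
    + apply cyl_sub; auto; lia.
    + intros r Hr [Gr _]. apply (Hm r); auto. eapply cyl_mono; [|eauto]; lia.
Qed.

Lemma intr_open G p : intr G p -> exists n, forall q, cyl2 p n q -> intr G q.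
Proof.
  intros [n Hn]; exists n; intros q Hq; exists n; intros r Hr; apply Hn; eapply cyl_same; eauto.
Qed.

Lemma N3_ND V : (forall p, V p -> exists n, forall q, cyl2 p n q -> V q) ->
  ND (fun p => ~ V p /\ forall n, exists q, cyl2 p n q /\ V q).
Proof.
  intros HV p n. destruct (classic (exists q, cyl2 p n q /\ V q)) as [[q [Hq Vq]]|H].
  - destruct (HV q Vq) as [m Hm]. exists q, (Nat.max n m); split.
    + apply cyl_sub; auto; lia.
    + intros r Hr [Vr _]. apply Vr, Hm. eapply cyl_mono; [|eauto]; lia.
  - exists p, n; split; auto. intros r Hr [_ Hc]. destruct (Hc n) as (q&Hq&Vq).
    apply H; exists q; split; auto. eapply cyl_same; eauto.
Qed.

Lemma sep (A F : Cantor2 -> Prop) (G : nat -> Cantor2 -> Prop) :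
  closed F -> (forall j, closed (G j)) ->
  Mg (fun p => A p /\ F p /\ forall j, ~ G j p) ->
  (forall p, F p -> forall n, ~ Mg (fun q => cyl2 p n q /\ A q)) ->
  Mg (fun p => F p /\ forall j, ~ G j p).
Proof.
  intros HF HG HM HD.
  set (V := fun p => exists j, intr (G j) p).
  set (Nb := fun p => (F p /\ ~ intr F p) \/ (exists j, G j p /\ ~ intr (G j) p) \/
                      (~ V p /\ forall n, exists q, cyl2 p n q /\ V q)).
  assert (HNb : Mg Nb).
  { apply Mg_union2; [apply ND_Mg, closed_bd_ND; auto|apply Mg_union2].
    - apply Mg_union. intros j; apply ND_Mg, closed_bd_ND; auto.
    - apply ND_Mg, N3_ND. intros p [j Hj]. destruct (intr_open _ _ Hj) as [n Hn].
      exists n; intros q Hq; exists j; auto. }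
  destruct (classic (Mg (fun p => F p /\ forall j, ~ G j p))) as [H|H]; auto.
  exfalso. destruct (classic (exists p, (F p /\ forall j, ~ G j p) /\ ~ Nb p)) as [[p [[Fp Gp] Np]]|H'].
  2:{ apply H. eapply Mg_sub; [apply HNb|]. intros p Hp. apply NNPP; intro C; apply H'; eauto. }
  assert (HiF : intr F p) by (apply NNPP; intro C; apply Np; left; auto).
  assert (HV : ~ V p) by (intros [j Hj]; apply (Gp j); destruct Hj as [m Hm]; apply Hm, cyl_refl).
  assert (HV2 : exists n, forall q, cyl2 p n q -> ~ V q).
  { apply NNPP; intro C. apply Np; right; right; split; auto. intros n.
    apply NNPP; intro C2; apply C; exists n; intros q Hq Vq; apply C2; eauto. }
  destruct HiF as [n1 Hn1]; destruct HV2 as [n2 Hn2].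
  apply (HD p Fp (Nat.max n1 n2)).
  eapply Mg_sub; [apply (Mg_union2 _ _ HM HNb)|].
  intros q [Hq Aq]. assert (Fq : F q) by (apply Hn1; eapply cyl_mono; [|eauto]; lia).
  destruct (classic (forall j, ~ G j q)) as [Hg|Hg]; [left; auto|right].
  apply not_all_not_ex in Hg as [j Gj]. right; left; exists j; split; auto.
  intros Hi; apply (Hn2 q); [eapply cyl_mono; [|eauto]; lia|]. exists j; auto.
Qed.
Open Scope R_scope.

Definition As {Z : Type} (d : Z -> Z -> R) (c : nat -> Z) (D : Cantor2 -> Z -> Prop)
  (s : list nat) (p : Cantor2) : Prop :=
  exists z, D p z /\ forall k, (k < length s)%nat -> d z (c (nth k s 0%nat)) < / INR (S k).

Lemma As_split {Z} (d : Z -> Z -> R) c D s p :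
  (forall z eps, eps > 0 -> exists n, d z (c n) < eps) ->
  As d c D s p -> exists j, As d c D (s ++ [j]) p.
Proof.
  intros Hc [z [Dz Hz]]. destruct (Hc z (/ INR (S (length s)))) as [j Hj].
  { apply Rinv_0_lt_compat, lt_0_INR; lia. }
  exists j, z; split; auto. intros k Hk. rewrite length_app in Hk; simpl in Hk.
  destruct (Nat.eq_dec k (length s)) as [->|Hne].
  - rewrite nth_middle; auto.
  - rewrite app_nth1 by lia. apply Hz; lia.
Qed.

Lemma As_app {Z} (d : Z -> Z -> R) c D s j p : As d c D (s ++ [j]) p -> As d c D s p.
Proof.
  intros [z [Dz Hz]]; exists z; split; auto. intros k Hk.
  specialize (Hz k). rewrite app_nth1 in Hz by lia. apply Hz. rewrite length_app; simpl; lia.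
Qed.

Lemma As_complete {Z} (d : Z -> Z -> R) c D (x : nat -> nat) p :
  is_metric d -> complete_metric d -> closed_in_prod d D ->
  (forall n m, exists q, cyl2 p m q /\ As d c D (map x (seq 0 n)) q) -> exists z, D p z.
Proof.
  intros [Hd0 [Hd1 [Hds Hdt]]] Hcomp HD H.
  destruct (choice (fun n qz => cyl2 p n (fst qz) /\ D (fst qz) (snd qz) /\
     forall k, (k < n)%nat -> d (snd qz) (c (x k)) < / INR (S k))) as [g Hg].
  { intros n. destruct (H n n) as (q&Hq&z&Dz&Hz). exists (q, z); split; [exact Hq|split; [exact Dz|]]. simpl.
    intros k Hk. specialize (Hz k). rewrite length_map, length_seq in Hz.
    rewrite (nth_indep (map x (seq 0 n)) 0%nat (x 0%nat)) in Hz by (rewrite length_map, length_seq; lia).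
    rewrite map_nth, seq_nth in Hz by lia. rewrite Nat.add_0_l in Hz. auto. }
  destruct (Hcomp (fun n => snd (g n))) as [l Hl].
  { intros eps Heps. destruct (archimed_cor1 (eps/2)) as [N [HN HN0]]; [lra|].
    exists N. intros m n Hm Hn.
    pose proof (proj2 (proj2 (Hg m)) (pred N) ltac:(lia)) as H1.
    pose proof (proj2 (proj2 (Hg n)) (pred N) ltac:(lia)) as H2.
    replace (S (pred N)) with N in H1, H2 by lia.
    pose proof (Hdt (snd (g m)) (c (x (pred N))) (snd (g n))).
    rewrite (Hds (c (x (pred N))) (snd (g n))) in H0. lra. }
  exists l. apply NNPP; intro C. destruct (HD p l C) as (n0&eps&Heps&Hn).
  destruct (Hl eps Heps) as [N1 HN1].
  set (n := Nat.max n0 N1). destruct (Hg n) as (Hq&Dq&_).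
  apply (Hn (fst (g n)) (snd (g n))); auto.
  - eapply cyl_mono; [|eauto]; lia.
  - rewrite Hds. apply HN1; lia.
Qed.

Fixpoint dec (f n : nat) : list nat :=
  match f with 0%nat => [] | S f' => match n with 0%nat => [] | S m =>
    fst (Cantor.of_nat m) :: dec f' (snd (Cantor.of_nat m)) end end.
Fixpoint code (l : list nat) : nat :=
  match l with [] => 0%nat | a :: l => S (Cantor.to_nat (a, code l)) end.
Lemma dec_code l : forall f, (code l <= f)%nat -> dec f (code l) = l.
Proof.
  induction l as [|a l IH]; intros f Hf.
  - destruct f; auto.
  - change (S (Cantor.to_nat (a, code l)) <= f)%nat in Hf.
    destruct f as [|f]; [lia|].
    change (fst (Cantor.of_nat (Cantor.to_nat (a, code l))) :: dec f (snd (Cantor.of_nat (Cantor.to_nat (a, code l)))) = a :: l).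
    rewrite Cantor.cancel_of_to; simpl.
    f_equal. apply IH. pose proof (Cantor.to_nat_non_decreasing a (code l)). lia.
Qed.

Lemma Mg_union_list (M : list nat -> Cantor2 -> Prop) :
  (forall s, Mg (M s)) -> Mg (fun p => exists s, M s p).
Proof.
  intros H. eapply Mg_sub; [apply (Mg_union (fun k => M (dec k k))); auto|].
  intros p [s Hs]. exists (code s). rewrite dec_code; auto.
Qed.

Lemma analytic_D (A : Cantor2 -> Prop) : analytic2 A -> Mg (fun p => Dn A p /\ ~ A p).
Proof.
  intros (Z&d&[Hm [Hc [c Hsep]]]&D&HD&HA).
  set (B := fun s p => Dn (As d c D s) p /\ forall j, ~ Dn (As d c D (s ++ [j])) p).
  assert (HB : forall s, Mg (B s)).
  { intros s. apply (sep (As d c D s) (Dn (As d c D s)) (fun j => Dn (As d c D (s ++ [j])))).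
    - apply D_closed.
    - intros j; apply D_closed.
    - eapply Mg_sub; [apply (Mg_union (fun j p => As d c D (s ++ [j]) p /\ ~ Dn (As d c D (s ++ [j])) p))|].
      + intros j; apply not_D_Mg.
      + intros p [Ap [_ Hj]]. destruct (As_split d c D s p Hsep Ap) as [j Hj']. exists j; split; auto.
    - intros p Hp; apply Hp. }
  eapply Mg_sub; [apply (Mg_union_list B HB)|].
  intros p [HDp HAp]. apply NNPP; intro C.
  assert (Hstep : forall s, exists j, Dn (As d c D s) p -> Dn (As d c D (s ++ [j])) p).
  { intros s. destruct (classic (Dn (As d c D s) p)) as [Hs|Hs]; [|exists 0%nat; tauto].
    apply NNPP; intro C2. apply C. exists s. split; auto. intros j Hj. apply C2; exists j; auto. }
  destruct (choice _ Hstep) as [g Hg].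
  set (L := fix L n := match n with 0%nat => [] | S n => L n ++ [g (L n)] end).
  set (x := fun n => g (L n)).
  assert (HL : forall n, L n = map x (seq 0 n)).
  { induction n; auto. rewrite seq_S, map_app, <- IHn. reflexivity. }
  assert (HDL : forall n, Dn (As d c D (L n)) p).
  { induction n.
    - intros m Hm0. apply (HDp m). eapply Mg_sub; [apply Hm0|]. intros q [Hq Aq]; split; auto.
      destruct (proj1 (HA q) Aq) as [z Dz]. exists z; split; auto. simpl; intros; lia.
    - apply (Hg (L n)), IHn. }
  apply HAp, HA. apply (As_complete d c D x p Hm Hc HD).
  intros n m. rewrite <- HL. apply NNPP; intro C3. apply (HDL n m).
  eapply Mg_sub; [apply Mg_empty|]. intros q Hq; apply C3; exists q; auto.
Qed.
Close Scope R_scope.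

Lemma loc A : analytic2 A -> ~ Mg A -> exists p n, Mg (fun q => cyl2 p n q /\ ~ A q).
Proof.
  intros HA HM. pose proof (analytic_D A HA) as HD.
  destruct (classic (exists p n, forall q, cyl2 p n q -> Dn A q)) as [(p&n&Hpn)|H].
  - exists p, n. eapply Mg_sub; [apply HD|]. intros q [Hq Aq]; auto.
  - exfalso. assert (HN : ND (Dn A)).
    { intros p n. destruct (classic (forall q, cyl2 p n q -> Dn A q)) as [H1|H1].
      { exfalso; apply H; eauto. }
      apply not_all_ex_not in H1 as [q Hq]. apply imply_to_and in Hq as [Hq1 Hq2].
      destruct (D_closed A q Hq2) as [m Hm]. exists q, (Nat.max n m); split.
      * apply cyl_sub; auto; lia.
      * intros r Hr. apply Hm. eapply cyl_mono; [|eauto]; lia. }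
    apply HM. eapply Mg_sub; [apply (Mg_union2 _ _ (not_D_Mg A) (ND_Mg (Dn A) HN))|].
    intros p Ap. destruct (classic (Dn A p)); [right|left]; auto.
Qed.

Lemma ND_pre N (psi : Cantor2 -> Cantor2) :
  (forall q, psi (psi q) = q) -> (forall m q r, cyl2 q m r -> cyl2 (psi q) m (psi r)) ->
  ND N -> ND (fun q => N (psi q)).
Proof.
  intros Hi Hc HN p n. destruct (HN (psi p) n) as (q&m&H1&H2).
  exists (psi q), m; split.
  - intros r Hr. rewrite <- (Hi r), <- (Hi p). apply Hc, H1. rewrite <- (Hi q). apply Hc; auto.
  - intros r Hr. apply H2. rewrite <- (Hi q). apply Hc; auto.
Qed.

Lemma Mg_pre A (psi : Cantor2 -> Cantor2) :
  (forall q, psi (psi q) = q) -> (forall m q r, cyl2 q m r -> cyl2 (psi q) m (psi r)) ->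
  Mg A -> Mg (fun q => A (psi q)).
Proof.
  intros Hi Hc (N&H1&H2). exists (fun k q => N k (psi q)); split.
  - intros k; apply ND_pre; auto.
  - intros p Hp; apply H2; auto.
Qed.

Lemma flip_meager A (psi : nat -> Cantor2 -> Cantor2) :
  analytic2 A ->
  (forall i q, psi i (psi i q) = q) ->
  (forall i m q r, cyl2 q m r -> cyl2 (psi i q) m (psi i r)) ->
  (forall i p q, cyl2 p i q -> cyl2 p i (psi i q)) ->
  (forall i q, A q -> A (psi i q) -> False) -> Mg A.
Proof.
  intros HA Hi Hc Hp Hd. apply NNPP; intro HM. destruct (loc A HA HM) as (p&n&HMn).
  apply (cyl_not_Mg p n). eapply Mg_sub; [apply (Mg_union2 _ _ HMn (Mg_pre _ (psi n) (Hi n) (Hc n) HMn))|].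
  intros q Hq; cbv beta. destruct (classic (A q)) as [Aq|Aq]; [|left; auto].
  destruct (classic (A (psi n q))) as [Aq'|Aq']; [exfalso; apply (Hd n q Aq Aq')|].
  right; split; auto.
Qed.

Definition flipb (i : nat) (a : Cantor) : Cantor :=
  fun j => if Nat.eq_dec j i then negb (a j) else a j.

Lemma flipb_inv i a : flipb i (flipb i a) = a.
Proof. apply functional_extensionality; intros j; unfold flipb; destruct (Nat.eq_dec j i); auto.
  apply Bool.negb_involutive. Qed.

Lemma flipb_agree i m a b : agree m a b -> agree m (flipb i a) (flipb i b).
Proof. intros H j Hj; unfold flipb; rewrite H; auto. Qed.

Lemma flipb_low i a : agree i a (flipb i a).
Proof. intros j Hj; unfold flipb; destruct (Nat.eq_dec j i); auto; lia. Qed.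

Lemma flipb_differ i a : differ_at_one a (flipb i a).
Proof. exists i; unfold flipb; split.
  - destruct (Nat.eq_dec i i); [|congruence]. destruct (a i); discriminate.
  - intros j Hj; destruct (Nat.eq_dec j i); congruence. Qed.

Lemma ND_nd A : ND A -> nowhere_dense2 A.
Proof.
  intros H p [n Hn]. destruct (H p n) as (q&m&H1&H2).
  destruct (Hn q (H1 q (cyl_refl q m)) m) as (r&Hr&Ar). apply (H2 r); auto.
Qed.

Lemma Mg_meager A : Mg A -> meager2 A.
Proof.
  intros (N&H1&H2). exists (fun k p => N k p /\ A p); split.
  - intros k; apply ND_nd. eapply ND_sub; [apply (H1 k)|]. intros p [? ?]; auto.
  - intros p; split; [intros Ap; destruct (H2 p Ap) as [k Hk]; exists k; auto|intros [k [_ Hk]]; auto].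
Qed.

Theorem lemma3p3 (E : Cantor -> Cantor -> Prop) :
  equivalence_rel E ->
  analytic2 (graph2 E) ->
  (forall a b, differ_at_one a b -> ~ E a b) ->
  meager2 (graph2 E) /\ ~ countably_many_classes E.
Proof.
  intros (Hr&Hs&Ht) HA Hdiff. split.
  - apply Mg_meager.
    apply (flip_meager _ (fun i q => (fst q, flipb i (snd q)))); auto.
    + intros i [a b]; simpl; rewrite flipb_inv; auto.
    + intros i m [a b] [a' b'] [H1 H2]; split; simpl in *; auto. apply flipb_agree; auto.
    + intros i [a b] [a' b'] [H1 H2]; split; simpl in *; auto.
      eapply agree_trans; [apply H2|apply flipb_low].
    + intros i [a b] H1 H2. unfold graph2 in *; simpl in *.
      apply (Hdiff b (flipb i b) (flipb_differ i b)). eapply Ht; [apply Hs, H1|apply H2].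
  - intros [f Hf].
    assert (HM : forall k, Mg (fun q : Cantor2 => E (fst q) (f k))).
    { intros k. apply (flip_meager _ (fun i q => (flipb i (fst q), snd q))).
      + destruct HA as (Z&d&Hp&D&HD&HAD).
        exists Z, d; split; auto. exists (fun q z => D (fst q, f k) z); split.
        * intros p z Hnd. destruct (HD _ _ Hnd) as (n&eps&He&Hn).
          exists n, eps; split; auto. intros q w Hq Hw. apply Hn; auto.
          destruct Hq; split; simpl; auto. apply agree_refl.
        * intros p. rewrite <- (HAD (fst p, f k)). reflexivity.
      + intros i [a b]; simpl; rewrite flipb_inv; auto.
      + intros i m [a b] [a' b'] [H1 H2]; split; simpl in *; auto. apply flipb_agree; auto.
      + intros i [a b] [a' b'] [H1 H2]; split; simpl in *; auto.
        eapply agree_trans; [apply H1|apply flipb_low].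
      + intros i [a b] H1 H2; simpl in *.
        apply (Hdiff a (flipb i a) (flipb_differ i a)). eapply Ht; [apply H1|apply Hs, H2]. }
    set (p0 := ((fun _ : nat => true), (fun _ : nat => true)) : Cantor2).
    apply (cyl_not_Mg p0 0). eapply Mg_sub; [apply (Mg_union _ HM)|].
    intros q _. destruct (Hf (fst q)) as [k Hk]; exists k; auto.
Qed.
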